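(* Let $\alpha\in[1,2]$, $1\le n\le m$, and fix a weight vector $\omega=(\omega_1,\dots,\omega_n)$ with $\omega_j\ge0$, $\sum_j\omega_j=1$. Over all $n$-tuples $(\rho_1,\dots,\rho_n)$ of $m\times m$ density matrices, the quantum Jensen–Tsallis divergence $D_\alpha^\omega(\rho_1,\dots,\rho_n)$ attains its maximum value at the degenerate matrices $\rho_j=\delta_j$, $j=1,\dots,n$, where $\delta_j=\mathrm{diag}(0,\dots,0,1,0,\dots,0)$ is the $m\times m$ diagonal matrix whose $j$-th diagonal entry is $1$ and all other entries are $0$.
   Context: An $m\times m$ density matrix is a real symmetric positive semidefinite $m\times m$ matrix with trace $1$. For $\alpha\in(0,1)\cup(1,\infty)$, the quantum Tsallis entropy is $H_\alpha(\rho)=\frac{1}{1-\alpha}\bigl(\mathrm{tr}(\rho^\alpha)-1\bigr)$ ($\rho^\alpha$ via spectral decomposition); for $\alpha=1$, $H_1(\rho)=-\mathrm{tr}(\rho\log\rho)$ is the von Neumann entropy (with $0\log0=0$). The quantum Jensen–Tsallis divergence of density matrices $\rho_1,\dots,\rho_n$ with weights $\omega$ is $$D_\alpha^{\omega}(\rho_1,\dots,\rho_n)=H_\alpha\Bigl(\sum_{j=1}^n\omega_j\rho_j\Bigr)-\sum_{j=1}^n\omega_jH_\alpha(\rho_j).$$ *)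

(* Defs.v *)
From Stdlib Require Import Reals Lra ClassicalEpsilon.
Open Scope R_scope.

Fixpoint rsum (n : nat) (f : nat -> R) : R :=
  match n with O => 0 | S k => rsum k f + f k end.

(* An m x m real matrix: entries A i j for i, j < m (others ignored). *)
Definition mat := nat -> nat -> R.

Definition mtrace (m : nat) (A : mat) : R := rsum m (fun i => A i i).

Definition symmetric (m : nat) (A : mat) : Prop :=
  forall i j, (i < m)%nat -> (j < m)%nat -> A i j = A j i.

Definition psd (m : nat) (A : mat) : Prop :=
  forall x : nat -> R,
    0 <= rsum m (fun i => rsum m (fun j => x i * A i j * x j)).

Definition density (m : nat) (A : mat) : Prop :=
  symmetric m A /\ psd m A /\ mtrace m A = 1.

(* Spectral decomposition A = Q diag(lam) Q^T with Q orthogonal. *)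
Definition orthogonal (m : nat) (Q : mat) : Prop :=
  forall i j, (i < m)%nat -> (j < m)%nat ->
    rsum m (fun k => Q k i * Q k j) = if Nat.eqb i j then 1 else 0.

Definition spectral (m : nat) (A : mat) (Q : mat) (lam : nat -> R) : Prop :=
  orthogonal m Q /\
  forall i j, (i < m)%nat -> (j < m)%nat ->
    A i j = rsum m (fun k => Q i k * lam k * Q j k).

(* A chosen spectral decomposition (exists for real symmetric matrices by the
   spectral theorem; default value otherwise). *)
Definition spec_choice (m : nat) (A : mat) : mat * (nat -> R) :=
  epsilon (inhabits ((fun _ _ => 0), (fun _ => 0)))
          (fun p => spectral m A (fst p) (snd p)).

(* tr f(A) via spectral decomposition: sum of f over the eigenvalues *)
Definition trf (m : nat) (f : R -> R) (A : mat) : R :=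
  rsum m (fun k => f (snd (spec_choice m A) k)).

(* x^a for x >= 0 (with 0^a = 0, a > 0) *)
Definition rpow (x a : R) : R :=
  if Rle_dec x 0 then 0 else Rpower x a.

(* x log x with 0 log 0 = 0 *)
Definition xlogx (x : R) : R :=
  if Rle_dec x 0 then 0 else x * ln x.

Definition tsallis (m : nat) (alpha : R) (A : mat) : R :=
  if Req_EM_T alpha 1 then - trf m xlogx A
  else (trf m (fun x => rpow x alpha) A - 1) / (1 - alpha).

Definition mwsum (n : nat) (w : nat -> R) (rho : nat -> mat) : mat :=
  fun a b => rsum n (fun j => w j * rho j a b).

Definition qJT (m n : nat) (alpha : R) (w : nat -> R) (rho : nat -> mat) : R :=
  tsallis m alpha (mwsum n w rho)
  - rsum n (fun j => w j * tsallis m alpha (rho j)).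

(* delta j: diagonal matrix with 1 at (j,j) (0-based index), 0 elsewhere *)
Definition delta (j : nat) : mat :=
  fun a b => if andb (Nat.eqb a j) (Nat.eqb b j) then 1 else 0.

(* Main.v *)
Require Import Defs.
From Stdlib Require Import Reals Lra Lia ClassicalEpsilon.

Module EigMC.
From HB Require Import structures.
From mathcomp Require Import all_boot all_order all_algebra.
From mathcomp Require Import complex.
From mathcomp Require Import Rstruct.
Set Implicit Arguments. Unset Strict Implicit. Unset Printing Implicit Defensive.
Import Order.TTheory GRing.Theory Num.Theory.
Local Open Scope ring_scope.

Notation RR := Rdefinitions.R.
Lemma eigvec_mc (m : nat) (M : 'M[RR]_m.+1) : M^T = M ->
  exists r : RR, exists2 v : 'rV[RR]_m.+1, v != 0 & v *m M = r *: v.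
Proof.
move=> Msym.
set Mc := map_mx (real_complex RR) M.
have herm : Mc \is hermsymmx.
  apply/is_hermitianmxP; rewrite expr0 scale1r; apply/matrixP => i j.
  rewrite !mxE -[in LHS]Msym mxE.
  exact: (esym (conjc_real _)).
have /orthomx_spectralP eqM := hermitian_normalmx herm.
have realsp := hermitian_spectral_diag_real herm.
set P := spectralmx Mc in eqM.
set d := spectral_diag Mc in eqM realsp.
have Punit : P \in unitmx by exact: spectral_unit.
set c := d 0 0.
have creal : c \is Num.real by exact: (mxOverP realsp).
exists (complex.Re c).
have cE : c = (complex.Re c)%:C%C.
  move: creal; rewrite realE !lecE /=.
  clearbody c; case: c => a b /=.
  by case/orP => /andP [/eqP h _]; first [rewrite h | rewrite -h].
suff /det0P [v vn0 vE] : \det (M - (complex.Re c)%:M) == 0.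
  exists v => //; move/eqP: vE; rewrite mulmxBr mul_mx_scalar subr_eq0.
  by move/eqP.
have : (\det (M - (complex.Re c)%:M))%:C%C == 0.
  rewrite -det_map_mx map_mxB /= map_scalar_mx /= -/Mc -cE.
  have E : Mc - c%:M = invmx P *m (diag_mx d - c%:M) *m P.
    rewrite mulmxBr mulmxBl -eqM; congr (_ - _).
    by rewrite mul_mx_scalar -scalemxAl (mulVmx Punit) scalemx1.
  rewrite E !det_mulmx det_inv.
  have -> : diag_mx d - c%:M = diag_mx (d - const_mx c).
    by rewrite linearB /= diag_const_mx.
  rewrite det_diag (bigD1 ord0) //= !mxE subrr mul0r mulr0 mul0r.
  by [].
move=> h; apply/eqP; apply: complexI; exact/eqP.
Qed.

Lemma eigvec_mc2 (m : nat) (M : 'M[RR]_m.+1) : M^T = M ->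
  exists r : RR, exists y : 'I_m.+1 -> RR,
    \sum_i y i * y i = 1 /\ forall i, \sum_j M i j * y j = r * y i.
Proof.
move=> Msym; have [r [v vn0 vE]] := eigvec_mc Msym.
set s := \sum_i v 0 i * v 0 i.
have s0 : 0 < s.
  have [i vi] : exists i, v 0 i != 0.
    apply/existsP; move: vn0; apply: contraR; rewrite negb_exists => /forallP h.
    by apply/eqP/rowP => i; rewrite mxE; apply/eqP; move: (h i); rewrite negbK.
  rewrite /s (bigD1 i) //= ltr_pwDl ?sumr_ge0 // => [|j _]; last by rewrite -expr2 sqr_ge0.
  by rewrite -expr2 exprn_even_gt0 //= vi.
pose q := Num.sqrt s.
have q0 : 0 < q by rewrite sqrtr_gt0.
exists r, (fun i => v 0 i / q); split.
  rewrite (eq_bigr (fun i => (v 0 i * v 0 i) / (q ^+ 2))); last first.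
    by move=> i _; rewrite expr2 mulf_div.
  rewrite -mulr_suml -/s /q sqr_sqrtr ?ltW // divff // gt_eqF //.
move=> i; rewrite (eq_bigr (fun j => (v 0 j * M j i) / q)); last first.
  by move=> j _; rewrite -{1}Msym mxE mulrA [M j i * _]mulrC.
rewrite -mulr_suml mulrA; congr (_ / _).
by have := congr1 (fun X : 'rV_m.+1 => X 0 i) vE; rewrite !mxE.
Qed.

Lemma rsum_big n (f : nat -> RR) : rsum n f = \sum_(i < n) f i.
Proof.
elim: n => [|n IH]; first by rewrite big_ord0.
by rewrite big_ord_recr /= IH.
Qed.

Lemma eig_exists (m : nat) (A : nat -> nat -> RR) : (0 < m)%coq_nat ->
  (forall i j, (i < m)%coq_nat -> (j < m)%coq_nat -> A i j = A j i) ->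
  exists (r : RR) (x : nat -> RR), rsum m (fun i => Rmult (x i) (x i)) = R1 /\
    forall i, (i < m)%coq_nat -> rsum m (fun j => Rmult (A i j) (x j)) = Rmult r (x i).
Proof.
case: m => [/ssrnat.ltP //|m] _ Asym.
pose M : 'M[RR]_m.+1 := \matrix_(i, j) A i j.
have Msym : M^T = M.
  apply/matrixP => i j; rewrite !mxE; apply: Asym; apply/ssrnat.ltP; exact: ltn_ord.
have [r [y [y1 yE]]] := eigvec_mc2 Msym.
exists r, (fun k => y (inord k)); split.
  rewrite rsum_big; etransitivity; last exact: y1.
  apply: eq_bigr => i _; by rewrite inord_val.
move=> i /ssrnat.ltP im; rewrite rsum_big.
have := yE (inord i); rewrite /M.
under eq_bigr do rewrite mxE inordK //.
move=> h; etransitivity; last exact: h.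
apply: eq_bigr => j _; by rewrite inord_val.
Qed.
End EigMC.


Open Scope R_scope.


Lemma rsum_ext n f g : (forall i, (i < n)%nat -> f i = g i) -> rsum n f = rsum n g.
Proof. induction n; intros H; simpl; auto. rewrite IHn by (intros; apply H; lia). rewrite H by lia. auto. Qed.

Lemma rsum_plus n f g : rsum n (fun i => f i + g i) = rsum n f + rsum n g.
Proof. induction n; simpl; [lra|]. rewrite IHn; lra. Qed.

Lemma rsum_minus n f g : rsum n (fun i => f i - g i) = rsum n f - rsum n g.
Proof. induction n; simpl; [lra|]. rewrite IHn; lra. Qed.

Lemma rsum_scal n c f : rsum n (fun i => c * f i) = c * rsum n f.
Proof. induction n; simpl; [lra|]. rewrite IHn; lra. Qed.

Lemma rsum_scal_r n c f : rsum n (fun i => f i * c) = rsum n f * c.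
Proof. induction n; simpl; [lra|]. rewrite IHn; lra. Qed.

Lemma rsum_0 n : rsum n (fun _ => 0) = 0.
Proof. induction n; simpl; [lra|]. rewrite IHn; lra. Qed.

Lemma rsum_zero n f : (forall i, (i < n)%nat -> f i = 0) -> rsum n f = 0.
Proof. intros H. rewrite (rsum_ext n f (fun _ => 0)) by auto. apply rsum_0. Qed.

Lemma rsum_swap n m F : rsum n (fun i => rsum m (fun j => F i j)) = rsum m (fun j => rsum n (fun i => F i j)).
Proof. induction n; simpl. - symmetry; apply rsum_0. - rewrite IHn, <- rsum_plus. reflexivity. Qed.

Lemma rsum_le n f g : (forall i, (i < n)%nat -> f i <= g i) -> rsum n f <= rsum n g.
Proof. induction n; intros H; simpl; [lra|]. assert (f n <= g n) by (apply H; lia).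
 assert (rsum n f <= rsum n g) by (apply IHn; intros; apply H; lia). lra. Qed.

Lemma rsum_nonneg n f : (forall i, (i < n)%nat -> 0 <= f i) -> 0 <= rsum n f.
Proof. intros H. rewrite <- (rsum_0 n). apply rsum_le. auto. Qed.

Lemma rsum_delta n j F : (j < n)%nat -> rsum n (fun i => if Nat.eqb i j then F i else 0) = F j.
Proof. induction n; intros H; [lia|]. simpl. destruct (Nat.eqb n j) eqn:E.
 - apply Nat.eqb_eq in E; subst j. rewrite rsum_zero; [lra|].
   intros i Hi. destruct (Nat.eqb_spec i n); [lia|auto].
 - apply Nat.eqb_neq in E. rewrite IHn by lia. lra. Qed.

Lemma rsum_delta' n j F : (j < n)%nat -> rsum n (fun i => if Nat.eqb j i then F i else 0) = F j.
Proof. intros H. rewrite <- (rsum_delta n j F H). apply rsum_ext. intros i _.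
 rewrite Nat.eqb_sym. reflexivity. Qed.

Lemma rsum_nonneg_zero n f : (forall i, (i < n)%nat -> 0 <= f i) -> rsum n f = 0 ->
  forall i, (i < n)%nat -> f i = 0.
Proof. induction n; intros H S i Hi; [lia|]. simpl in S.
 assert (0 <= rsum n f) by (apply rsum_nonneg; intros; apply H; lia).
 assert (0 <= f n) by (apply H; lia).
 destruct (Nat.eq_dec i n). - subst; lra.
 - apply IHn; [intros; apply H; lia| lra | lia]. Qed.

Lemma rsum_term n f j : (forall i, (i < n)%nat -> 0 <= f i) -> (j < n)%nat -> f j <= rsum n f.
Proof. induction n; intros H Hj; [lia|]. simpl.
 assert (0 <= rsum n f) by (apply rsum_nonneg; intros; apply H; lia).
 assert (0 <= f n) by (apply H; lia).
 destruct (Nat.eq_dec j n). - subst; lra.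
 - assert (f j <= rsum n f) by (apply IHn; [intros; apply H; lia|lia]). lra. Qed.

Lemma rsum_diag n F : (forall i j, (i < n)%nat -> (j < n)%nat -> i <> j -> F i j = 0) ->
  rsum n (fun i => rsum n (fun j => F i j)) = rsum n (fun i => F i i).
Proof. intros H. apply rsum_ext. intros i Hi.
 rewrite <- (rsum_delta n i (fun j => F i j)) by auto. apply rsum_ext. intros j Hj.
 destruct (Nat.eqb_spec j i). subst; auto. apply H; auto. Qed.

Lemma rsum_split n p f : rsum (n + p) f = rsum n f + rsum p (fun i => f (n + i)%nat).
Proof. induction p; simpl. - rewrite Nat.add_0_r; lra. - rewrite Nat.add_succ_r; simpl. rewrite IHp; lra. Qed.


Definition dot m (x y : nat -> R) := rsum m (fun i => x i * y i).
Definition col (Q : mat) (l : nat) : nat -> R := fun i => Q i l.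

Lemma dot_sym m x y : dot m x y = dot m y x.
Proof. unfold dot. apply rsum_ext; intros; ring. Qed.

Lemma rsum_mul_rsum_r n m (F : nat -> nat -> R) y :
  rsum n (fun b => rsum m (fun k => F k b) * y b) = rsum m (fun k => rsum n (fun b => F k b * y b)).
Proof. rewrite <- rsum_swap. apply rsum_ext; intros. rewrite rsum_scal_r. reflexivity. Qed.

Lemma rsum_mul_rsum_l n m (F : nat -> nat -> R) y :
  rsum n (fun b => y b * rsum m (fun k => F k b)) = rsum m (fun k => rsum n (fun b => y b * F k b)).
Proof. rewrite <- rsum_swap. apply rsum_ext; intros. rewrite rsum_scal. reflexivity. Qed.

Lemma spec_Av m A Q lam y : spectral m A Q lam -> forall a, (a < m)%nat ->
  rsum m (fun b => A a b * y b) = rsum m (fun k => Q a k * lam k * dot m (col Q k) y).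
Proof. intros [HO HA] a Ha.
 transitivity (rsum m (fun b => rsum m (fun k => Q a k * lam k * Q b k) * y b)).
 { apply rsum_ext; intros b Hb. rewrite HA; auto. }
 rewrite rsum_mul_rsum_r. apply rsum_ext; intros k Hk. unfold dot, col.
 rewrite <- rsum_scal. apply rsum_ext; intros; ring. Qed.

Lemma spec_quad m A Q lam x y : spectral m A Q lam ->
  rsum m (fun a => rsum m (fun b => x a * A a b * y b)) =
  rsum m (fun k => lam k * dot m (col Q k) x * dot m (col Q k) y).
Proof. intros HS.
 transitivity (rsum m (fun a => x a * rsum m (fun k => Q a k * lam k * dot m (col Q k) y))).
 { apply rsum_ext; intros a Ha. rewrite <- (spec_Av m A Q lam y HS a Ha), <- rsum_scal.
   apply rsum_ext; intros; ring. }
 rewrite rsum_mul_rsum_l. apply rsum_ext; intros k Hk. unfold dot, col.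
 transitivity (rsum m (fun a => (lam k * rsum m (fun i => Q i k * y i)) * (Q a k * x a))).
 { apply rsum_ext; intros; ring. }
 rewrite rsum_scal. ring. Qed.

Lemma orth_dot m Q k l : orthogonal m Q -> (k < m)%nat -> (l < m)%nat ->
  dot m (col Q k) (col Q l) = if Nat.eqb k l then 1 else 0.
Proof. intros HO Hk Hl. unfold dot, col. apply HO; auto. Qed.

Lemma spec_eig m A Q lam : spectral m A Q lam -> forall l i, (l < m)%nat -> (i < m)%nat ->
  rsum m (fun j => A i j * Q j l) = lam l * Q i l.
Proof. intros HS l i Hl Hi. pose proof HS as [HO _].
 change (rsum m (fun j => A i j * col Q l j) = lam l * Q i l).
 rewrite (spec_Av m A Q lam (col Q l) HS i Hi).
 transitivity (rsum m (fun k => if Nat.eqb k l then Q i k * lam k else 0)).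
 { apply rsum_ext; intros k Hk. rewrite orth_dot by auto. destruct (Nat.eqb k l); ring. }
 rewrite rsum_delta by auto. ring. Qed.

Lemma spec_rayleigh m A Q lam l : spectral m A Q lam -> (l < m)%nat ->
  rsum m (fun a => rsum m (fun b => Q a l * A a b * Q b l)) = lam l.
Proof. intros HS Hl. pose proof HS as [HO _].
 change (rsum m (fun a => rsum m (fun b => col Q l a * A a b * col Q l b)) = lam l).
 rewrite (spec_quad m A Q lam (col Q l) (col Q l) HS).
 transitivity (rsum m (fun k => if Nat.eqb k l then lam k else 0)).
 { apply rsum_ext; intros k Hk. rewrite orth_dot by auto. destruct (Nat.eqb k l); ring. }
 apply rsum_delta; auto. Qed.

Lemma spec_nonneg m A Q lam l : spectral m A Q lam -> psd m A -> (l < m)%nat -> 0 <= lam l.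
Proof. intros HS HP Hl. rewrite <- (spec_rayleigh m A Q lam l HS Hl). apply (HP (col Q l)). Qed.

Lemma spec_trace m A Q lam : spectral m A Q lam -> mtrace m A = rsum m lam.
Proof. intros [HO HA]. unfold mtrace.
 transitivity (rsum m (fun i => rsum m (fun k => Q i k * lam k * Q i k))).
 { apply rsum_ext; intros; apply HA; auto. }
 rewrite rsum_swap. apply rsum_ext; intros k Hk.
 transitivity (lam k * rsum m (fun i => Q i k * Q i k)).
 { rewrite <- rsum_scal. apply rsum_ext; intros; ring. }
 rewrite HO by auto. rewrite Nat.eqb_refl. ring. Qed.

Lemma bessel m Q x : orthogonal m Q ->
  rsum m (fun l => dot m (col Q l) x * dot m (col Q l) x) <= dot m x x.
Proof. intros HO. set (c := fun l => dot m (col Q l) x).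
 assert (H0 : 0 <= rsum m (fun i => (x i - rsum m (fun l => c l * Q i l)) * (x i - rsum m (fun l => c l * Q i l)))).
 { apply rsum_nonneg; intros; apply Rle_0_sqr. }
 assert (E1 : rsum m (fun i => x i * rsum m (fun l => c l * Q i l)) = rsum m (fun l => c l * c l)).
 { rewrite rsum_mul_rsum_l. apply rsum_ext; intros l Hl.
   transitivity (c l * rsum m (fun i => Q i l * x i)).
   { rewrite <- rsum_scal. apply rsum_ext; intros; ring. }
   reflexivity. }
 assert (E2 : rsum m (fun i => rsum m (fun l => c l * Q i l) * rsum m (fun l => c l * Q i l)) = rsum m (fun l => c l * c l)).
 { transitivity (rsum m (fun i => rsum m (fun l => rsum m (fun l' => (c l * c l') * (Q i l * Q i l'))))).
   { apply rsum_ext; intros i Hi. rewrite <- rsum_scal_r. apply rsum_ext; intros l Hl.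
     rewrite <- rsum_scal. apply rsum_ext; intros; ring. }
   rewrite rsum_swap.
   transitivity (rsum m (fun l => rsum m (fun l' => (c l * c l') * (if Nat.eqb l l' then 1 else 0)))).
   { apply rsum_ext; intros l Hl. rewrite rsum_swap. apply rsum_ext; intros l' Hl'.
     rewrite rsum_scal. rewrite HO by auto. reflexivity. }
   rewrite rsum_diag. { apply rsum_ext; intros. rewrite Nat.eqb_refl. ring. }
   intros i j Hi Hj Hij. destruct (Nat.eqb_spec i j); [lia|ring]. }
 assert (E : rsum m (fun i => (x i - rsum m (fun l => c l * Q i l)) * (x i - rsum m (fun l => c l * Q i l)))
   = dot m x x - 2 * rsum m (fun i => x i * rsum m (fun l => c l * Q i l)) +
     rsum m (fun i => rsum m (fun l => c l * Q i l) * rsum m (fun l => c l * Q i l))).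
 { unfold dot. rewrite <- rsum_scal, <- rsum_minus, <- rsum_plus. apply rsum_ext; intros; ring. }
 rewrite E, E1, E2 in H0. change (rsum m (fun l => c l * c l) <= dot m x x). lra. Qed.


Definition kd (i j : nat) : R := if Nat.eqb i j then 1 else 0.
Definition mm (m : nat) (P Q : mat) : mat := fun i j => rsum m (fun k => P i k * Q k j).
Definition tr (P : mat) : mat := fun i j => P j i.
Definition meq (m : nat) (P Q : mat) : Prop := forall i j, (i < m)%nat -> (j < m)%nat -> P i j = Q i j.

Lemma kd_sym i j : kd i j = kd j i.
Proof. unfold kd. rewrite Nat.eqb_sym. auto. Qed.

Lemma mm_assoc m P Q S i j : mm m (mm m P Q) S i j = mm m P (mm m Q S) i j.
Proof. unfold mm. rewrite rsum_mul_rsum_r. apply rsum_ext; intros.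
 rewrite <- rsum_scal. apply rsum_ext; intros; ring. Qed.

Lemma mm_ext m P P' Q Q' : meq m P P' -> meq m Q Q' -> meq m (mm m P Q) (mm m P' Q').
Proof. intros HP HQ i j Hi Hj. unfold mm. apply rsum_ext; intros k Hk.
 rewrite HP, HQ; auto. Qed.

Lemma mm_id_l m P i j : (i < m)%nat -> mm m kd P i j = P i j.
Proof. intros Hi. unfold mm, kd.
 rewrite <- (rsum_delta' m i (fun k => P k j) Hi). apply rsum_ext; intros.
 destruct (Nat.eqb i i0); ring. Qed.

Lemma mm_id_r m P i j : (j < m)%nat -> mm m P kd i j = P i j.
Proof. intros Hj. unfold mm, kd.
 rewrite <- (rsum_delta m j (fun k => P i k) Hj). apply rsum_ext; intros.
 destruct (Nat.eqb i0 j); ring. Qed.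

Lemma tr_mm m P Q i j : tr (mm m P Q) i j = mm m (tr Q) (tr P) i j.
Proof. unfold tr, mm. apply rsum_ext; intros; ring. Qed.

Lemma meq_refl m P : meq m P P. Proof. intros i j _ _; auto. Qed.
Lemma meq_sym m P Q : meq m P Q -> meq m Q P. Proof. intros H i j Hi Hj; symmetry; auto. Qed.
Lemma meq_trans m P Q S : meq m P Q -> meq m Q S -> meq m P S.
Proof. intros H1 H2 i j Hi Hj; rewrite H1, H2; auto. Qed.
Lemma meq_assoc m P Q S : meq m (mm m (mm m P Q) S) (mm m P (mm m Q S)).
Proof. intros i j _ _; apply mm_assoc. Qed.

Lemma orth_meq m Q : orthogonal m Q <-> meq m (mm m (tr Q) Q) kd.
Proof. unfold orthogonal, meq, mm, tr, kd. split; intros H i j Hi Hj; rewrite <- H; auto. Qed.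

Definition qlam (Q : mat) (lam : nat -> R) : mat := fun i k => Q i k * lam k.

Lemma spectral_meq m A Q lam : spectral m A Q lam <-> orthogonal m Q /\ meq m A (mm m (qlam Q lam) (tr Q)).
Proof. unfold spectral, meq, mm, qlam, tr. tauto. Qed.

(* Orthogonal square: Q^T Q = I implies nothing about Q Q^T in general, so we
   use symmetric orthogonal H explicitly. *)

Section House.
Variable k : nat.
Variable v : nat -> R.
Hypothesis Hv : rsum (S k) (fun i => v i * v i) = 1.

Let w i := v i - kd i k.
Let ww := dot (S k) w w.
Let c := if Req_EM_T ww 0 then 0 else 2 / ww.
Definition house : mat := fun i j => kd i j - c * w i * w j.

Lemma house_sym i j : house i j = house j i.
Proof. unfold house. rewrite kd_sym. ring. Qed.

Lemma ww_val : ww = 2 - 2 * v k.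
Proof. unfold ww, dot, w.
 transitivity (rsum (S k) (fun i => v i * v i) - 2 * rsum (S k) (fun i => if Nat.eqb i k then v i else 0)
   + rsum (S k) (fun i => if Nat.eqb i k then 1 else 0)).
 { rewrite <- rsum_scal, <- rsum_minus, <- rsum_plus. apply rsum_ext; intros.
   unfold kd. destruct (Nat.eqb i k); ring. }
 rewrite Hv, !rsum_delta by lia. ring. Qed.

Lemma cww : c * c * ww = 2 * c.
Proof. unfold c. destruct (Req_EM_T ww 0). ring. field. auto. Qed.

Lemma house_orth i j : (i < S k)%nat -> (j < S k)%nat ->
  rsum (S k) (fun l => house i l * house j l) = kd i j.
Proof. intros Hi Hj. unfold house.
 transitivity (rsum (S k) (fun l => if Nat.eqb i l then kd l j else 0)
   - c * w j * rsum (S k) (fun l => if Nat.eqb i l then w l else 0)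
   - c * w i * rsum (S k) (fun l => if Nat.eqb j l then w l else 0)
   + c * c * w i * w j * ww).
 { unfold ww, dot. rewrite <- !rsum_scal, <- !rsum_minus, <- rsum_plus.
   apply rsum_ext; intros l Hl. unfold kd.
   destruct (Nat.eqb_spec i l); destruct (Nat.eqb_spec j l); destruct (Nat.eqb_spec l j); try lia; ring. }
 rewrite !rsum_delta' by auto.
 replace (c * c * w i * w j * ww) with (w i * w j * (c * c * ww)) by ring.
 rewrite cww. ring. Qed.

Lemma w_zero : ww = 0 -> forall i, (i < S k)%nat -> w i = 0.
Proof. intros H0 i Hi. unfold ww, dot in H0.
 assert (w i * w i = 0).
 { apply (rsum_nonneg_zero (S k) (fun i => w i * w i)); auto. intros; nra. }
 nra. Qed.

Lemma house_col i : (i < S k)%nat -> house i k = v i.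
Proof. intros Hi. unfold house. pose proof ww_val as E.
 unfold c. destruct (Req_EM_T ww 0) as [H0|H0].
 - pose proof (w_zero H0 i Hi) as Hw. unfold w in Hw. lra.
 - unfold w at 2. unfold kd at 2. rewrite Nat.eqb_refl.
   unfold w. field_simplify; [|lra]. rewrite E. field. lra. Qed.

End House.


Lemma meq_mm_l m P P' Q : meq m P P' -> meq m (mm m P Q) (mm m P' Q).
Proof. intros H. apply mm_ext; auto using meq_refl. Qed.
Lemma meq_mm_r m P Q Q' : meq m Q Q' -> meq m (mm m P Q) (mm m P Q').
Proof. intros H. apply mm_ext; auto using meq_refl. Qed.
Lemma meq_assoc' m P Q S : meq m (mm m P (mm m Q S)) (mm m (mm m P Q) S).
Proof. apply meq_sym, meq_assoc. Qed.
Lemma meq_id_l m P : meq m (mm m kd P) P.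
Proof. intros i j Hi Hj; apply mm_id_l; auto. Qed.
Lemma meq_id_r m P : meq m (mm m P kd) P.
Proof. intros i j Hi Hj; apply mm_id_r; auto. Qed.
Lemma meq_tr_mm m P Q : meq m (tr (mm m P Q)) (mm m (tr Q) (tr P)).
Proof. intros i j _ _; apply tr_mm. Qed.

Lemma Q2_spec k (C Q' : mat) (mu' : nat -> R) (r : R) :
  symmetric (S k) C -> (forall i, (i < S k)%nat -> C i k = r * kd i k) ->
  spectral k C Q' mu' ->
  spectral (S k) C (fun i l => if Nat.eqb l k then kd i k else if Nat.eqb i k then 0 else Q' i l)
                   (fun l => if Nat.eqb l k then r else mu' l).
Proof. intros Cs Ck [HO HA]. split.
 - intros i j Hi Hj. cbn [rsum].
   rewrite (rsum_ext k _ (fun a => (if i =? k then 0 else Q' a i) * (if j =? k then 0 else Q' a j))).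
   2: { intros a Ha. unfold kd. destruct (Nat.eqb_spec a k); [lia|].
        destruct (i =? k), (j =? k); reflexivity. }
   rewrite (Nat.eqb_refl k). unfold kd. rewrite (Nat.eqb_refl k).
   destruct (Nat.eqb_spec i k); destruct (Nat.eqb_spec j k).
   + subst. rewrite Nat.eqb_refl, rsum_zero by (intros; ring). ring.
   + rewrite rsum_zero by (intros; ring). destruct (Nat.eqb_spec i j); [lia|ring].
   + rewrite rsum_zero by (intros; ring). destruct (Nat.eqb_spec i j); [lia|ring].
   + rewrite <- (HO i j) by lia. ring.
 - intros i j Hi Hj. cbn [rsum].
   rewrite (rsum_ext k _ (fun a => (if i =? k then 0 else Q' i a) * mu' a * (if j =? k then 0 else Q' j a))).
   2: { intros a Ha. destruct (Nat.eqb_spec a k); [lia|]. reflexivity. }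
   rewrite (Nat.eqb_refl k).
   destruct (Nat.eqb_spec i k) as [Ei|Ei].
   + subst i. rewrite Cs by auto. rewrite Ck by auto. rewrite rsum_zero by (intros; ring).
     unfold kd. rewrite Nat.eqb_refl. ring.
   + destruct (Nat.eqb_spec j k) as [Ej|Ej].
     * subst j. rewrite Ck by auto. rewrite rsum_zero by (intros; ring).
       unfold kd. rewrite Nat.eqb_refl. ring.
     * unfold kd. destruct (Nat.eqb_spec i k); [lia|]. destruct (Nat.eqb_spec j k); [lia|].
       rewrite HA by lia. ring.
Qed.

Theorem spec_exists : forall m A, symmetric m A -> exists Q lam, spectral m A Q lam.
Proof.
 induction m as [|k IH]; intros A HA.
 - exists (fun _ _ => 0), (fun _ => 0). split; [intros i j Hi; inversion Hi | intros i j Hi; inversion Hi].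
 - destruct (@EigMC.eig_exists (S k) A (Nat.lt_0_succ k) HA) as [r [v [Hv1 Hv]]].
   set (H := house k v).
   assert (HHs : forall i j, H i j = H j i) by (intros; apply house_sym).
   assert (HH : meq (S k) (mm (S k) (tr H) H) kd).
   { intros i j Hi Hj. unfold mm, tr. rewrite <- (house_orth k v i j Hi Hj).
     apply rsum_ext; intros l Hl. fold H. rewrite (HHs l i), (HHs l j). auto. }
   assert (HH' : meq (S k) (mm (S k) H (tr H)) kd).
   { intros i j Hi Hj. unfold mm, tr. rewrite <- (house_orth k v i j Hi Hj).
     apply rsum_ext; intros l Hl. fold H. rewrite (HHs j l). auto. }
   set (C := mm (S k) (mm (S k) (tr H) A) H).
   assert (Csym : symmetric (S k) C).
   { intros i j Hi Hj. unfold C, mm, tr.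
     transitivity (rsum (S k) (fun b => rsum (S k) (fun a => H a i * A a b * H b j))).
     { apply rsum_ext; intros. symmetry. apply rsum_scal_r. }
     rewrite rsum_swap.
     transitivity (rsum (S k) (fun b => rsum (S k) (fun a => H a j * A a b * H b i))).
     2: { apply rsum_ext; intros. apply rsum_scal_r. }
     apply rsum_ext; intros a Ha. apply rsum_ext; intros b Hb. rewrite (HA a b) by auto. ring. }
   assert (Ck : forall i, (i < S k)%nat -> C i k = r * kd i k).
   { intros i Hi. unfold C, mm, tr.
     transitivity (rsum (S k) (fun a => H a i * rsum (S k) (fun b => A a b * v b))).
     { rewrite rsum_mul_rsum_r. apply rsum_ext; intros a Ha. rewrite <- rsum_scal.
       apply rsum_ext; intros b Hb. unfold H. rewrite house_col by auto. ring. }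
     transitivity (r * rsum (S k) (fun a => H a i * H a k)).
     { rewrite <- rsum_scal. apply rsum_ext; intros a Ha. rewrite Hv by auto.
       unfold H. rewrite house_col by auto. ring. }
     f_equal. apply (HH i k Hi). lia. }
   destruct (IH C) as [Q' [mu' HQ']].
   { intros i j Hi Hj. apply Csym; lia. }
   pose proof (Q2_spec k C Q' mu' r Csym Ck HQ') as HQ2.
   set (Q2 := fun i l => if Nat.eqb l k then kd i k else if Nat.eqb i k then 0 else Q' i l) in HQ2.
   set (lam2 := fun l => if Nat.eqb l k then r else mu' l) in HQ2.
   exists (mm (S k) H Q2), lam2.
   apply spectral_meq in HQ2. destruct HQ2 as [HO2 HC2]. apply orth_meq in HO2.
   apply spectral_meq. split.
   + apply orth_meq.
     eapply meq_trans. apply meq_mm_l, meq_tr_mm.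
     eapply meq_trans. apply meq_assoc.
     eapply meq_trans. apply meq_mm_r, meq_assoc'.
     eapply meq_trans. apply meq_mm_r, meq_mm_l, HH.
     eapply meq_trans. apply meq_mm_r, meq_id_l.
     exact HO2.
   + assert (EA : meq (S k) A (mm (S k) H (mm (S k) C (tr H)))).
     { apply meq_sym. unfold C.
       eapply meq_trans. apply meq_mm_r, meq_assoc.
       eapply meq_trans. apply meq_mm_r, meq_mm_r, HH'.
       eapply meq_trans. apply meq_mm_r, meq_id_r.
       eapply meq_trans. apply meq_assoc'.
       eapply meq_trans. apply meq_mm_l, HH'.
       apply meq_id_l. }
     eapply meq_trans. exact EA.
     assert (HC2p : meq (S k) C (mm (S k) (qlam Q2 lam2) (tr Q2))) by exact HC2.
     eapply meq_trans. apply meq_mm_r, meq_mm_l, HC2p.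
     eapply meq_trans. apply meq_mm_r, meq_assoc.
     eapply meq_trans. apply meq_assoc'.
     apply mm_ext.
     * intros i j Hi Hj. unfold qlam, mm. rewrite <- rsum_scal_r. apply rsum_ext; intros; ring.
     * apply meq_sym, meq_tr_mm.
Qed.

Lemma spec_choice_ok m A : symmetric m A ->
  spectral m A (fst (spec_choice m A)) (snd (spec_choice m A)).
Proof. intros HA. unfold spec_choice.
 apply (epsilon_spec (inhabits ((fun _ _ => 0), (fun _ => 0))) (fun p => spectral m A (fst p) (snd p))).
 destruct (spec_exists m A HA) as [Q [lam H]]. exists (Q, lam). exact H. Qed.


Lemma rpow_0 a : rpow 0 a = 0.
Proof. unfold rpow. destruct (Rle_dec 0 0); [auto|lra]. Qed.
Lemma rpow_pos x a : 0 < x -> rpow x a = Rpower x a.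
Proof. intros H. unfold rpow. destruct (Rle_dec x 0); [lra|auto]. Qed.
Lemma rpow_nonneg x a : 0 <= rpow x a.
Proof. unfold rpow. destruct (Rle_dec x 0); [lra|]. unfold Rpower. left; apply exp_pos. Qed.
Lemma xlogx_0 : xlogx 0 = 0.
Proof. unfold xlogx. destruct (Rle_dec 0 0); [auto|lra]. Qed.
Lemma xlogx_pos x : 0 < x -> xlogx x = x * ln x.
Proof. intros H. unfold xlogx. destruct (Rle_dec x 0); [lra|auto]. Qed.

Lemma Rpower_xm1 x a : 0 < x -> x * Rpower x (a - 1) = Rpower x a.
Proof. intros H. rewrite <- (Rpower_1 x H) at 1. rewrite <- Rpower_plus. f_equal; ring. Qed.

Lemma pow_tangent a x y : 1 <= a -> 0 < x -> 0 < y ->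
  Rpower x a + a * Rpower x (a - 1) * (y - x) <= Rpower y a.
Proof. intros Ha Hx Hy.
 assert (D : forall c, 0 < c -> derivable_pt_lim (fun z => Rpower z a) c (a * Rpower c (a - 1))).
 { intros c Hc. apply derivable_pt_lim_power; auto. }
 destruct (Rtotal_order x y) as [Hxy|[Hxy|Hxy]].
 - destruct (MVT_cor2 (fun z => Rpower z a) (fun c => a * Rpower c (a - 1)) x y Hxy)
     as [c [Hc1 Hc2]].
   { intros c Hc. apply D. lra. }
   assert (Rpower x (a - 1) <= Rpower c (a - 1)) by (apply Rle_Rpower_l; lra).
   assert (0 <= a * (Rpower c (a - 1) - Rpower x (a - 1)) * (y - x)) by
     (apply Rmult_le_pos; [apply Rmult_le_pos|]; lra).
   simpl in Hc1. lra.
 - subst. lra.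
 - destruct (MVT_cor2 (fun z => Rpower z a) (fun c => a * Rpower c (a - 1)) y x Hxy)
     as [c [Hc1 Hc2]].
   { intros c Hc. apply D. lra. }
   assert (Rpower c (a - 1) <= Rpower x (a - 1)) by (apply Rle_Rpower_l; lra).
   assert (0 <= a * (Rpower x (a - 1) - Rpower c (a - 1)) * (x - y)) by
     (apply Rmult_le_pos; [apply Rmult_le_pos|]; lra).
   simpl in Hc1. lra.
Qed.

Lemma rpow_tangent a x : 1 <= a -> 0 < x -> exists s, (forall z, 0 <= z -> rpow x a + s * (z - x) <= rpow z a)
  /\ rpow x a <= x * s.
Proof. intros Ha Hx. exists (a * Rpower x (a - 1)). rewrite rpow_pos by auto.
 assert (E : x * (a * Rpower x (a - 1)) = a * Rpower x a) by (rewrite <- Rpower_xm1 with (a := a) by auto; ring).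
 assert (P : 0 < Rpower x a) by (unfold Rpower; apply exp_pos).
 split.
 - intros z Hz. destruct Hz as [Hz|Hz].
   + rewrite rpow_pos by auto. apply pow_tangent; auto.
   + subst. rewrite rpow_0. nra.
 - nra. Qed.

Lemma ln_le_lin t : 0 < t -> ln t <= t - 1.
Proof. intros H. pose proof (exp_ineq1_le (ln t)). rewrite exp_ln in H0; auto. lra. Qed.

Lemma xlogx_tangent x : 0 < x -> exists s, (forall z, 0 <= z -> xlogx x + s * (z - x) <= xlogx z)
  /\ xlogx x <= x * s.
Proof. intros Hx. exists (1 + ln x). rewrite xlogx_pos by auto. split.
 - intros z Hz. destruct Hz as [Hz|Hz].
   + rewrite xlogx_pos by auto.
     pose proof (ln_le_lin (x / z)) as L.
     assert (0 < x / z) by (apply Rdiv_lt_0_compat; auto).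
     unfold Rdiv in L; rewrite ln_mult, ln_Rinv in L by (auto; apply Rinv_0_lt_compat; auto).
     assert (z * (ln x - ln z) <= z * (x / z - 1)) by (apply Rmult_le_compat_l; lra).
     replace (z * (x / z - 1)) with (x - z) in H0 by (field; lra). nra.
   + subst. rewrite xlogx_0. nra.
 - nra. Qed.

Lemma jensen (f : R -> R) (L : nat) (cc y : nat -> R) : f 0 = 0 ->
  (forall x, 0 < x -> exists s, (forall z, 0 <= z -> f x + s * (z - x) <= f z) /\ f x <= x * s) ->
  (forall l, (l < L)%nat -> 0 <= cc l) -> (forall l, (l < L)%nat -> 0 <= y l) -> rsum L cc <= 1 ->
  f (rsum L (fun l => cc l * y l)) <= rsum L (fun l => cc l * f (y l)).
Proof. intros F0 FT Hc Hy HC.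
 assert (X0 : 0 <= rsum L (fun l => cc l * y l)) by (apply rsum_nonneg; intros; apply Rmult_le_pos; auto).
 destruct X0 as [Xp|X0].
 - destruct (FT _ Xp) as [s [Hs1 Hs2]]. set (x := rsum L (fun l => cc l * y l)) in *.
   assert (rsum L (fun l => cc l * (f x + s * (y l - x))) <= rsum L (fun l => cc l * f (y l))).
   { apply rsum_le; intros. apply Rmult_le_compat_l; auto. }
   assert (E : rsum L (fun l => cc l * (f x + s * (y l - x))) = rsum L cc * (f x - s * x) + s * x).
   { transitivity (rsum L cc * (f x - s * x) + s * rsum L (fun l => cc l * y l)).
     { rewrite <- rsum_scal, <- rsum_scal_r, <- rsum_plus. apply rsum_ext; intros; ring. }
     fold x. ring. }
   rewrite E in H.
   assert (0 <= rsum L cc) by (apply rsum_nonneg; auto). nra.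
 - rewrite <- X0, F0. apply rsum_nonneg. intros l Hl.
   assert (cc l * y l = 0).
   { apply (rsum_nonneg_zero L (fun l => cc l * y l)); auto. intros; apply Rmult_le_pos; auto. }
   destruct (Req_dec (cc l) 0) as [E|E]. rewrite E; lra.
   assert (y l = 0). { apply Rmult_integral in H. destruct H; [contradiction|auto]. }
   rewrite H0, F0. lra.
Qed.


Lemma quad_mix m n w rho Qs lams x y :
  (forall j, (j < n)%nat -> spectral m (rho j) (Qs j) (lams j)) ->
  rsum m (fun a => rsum m (fun b => x a * mwsum n w rho a b * y b)) =
  rsum n (fun j => w j * rsum m (fun k => lams j k * dot m (col (Qs j) k) x * dot m (col (Qs j) k) y)).
Proof. intros HS. unfold mwsum.
 transitivity (rsum m (fun a => rsum m (fun b => rsum n (fun j => w j * (x a * rho j a b * y b))))).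
 { apply rsum_ext; intros a Ha; apply rsum_ext; intros b Hb.
   rewrite <- rsum_scal, <- rsum_scal_r. apply rsum_ext; intros; ring. }
 transitivity (rsum m (fun a => rsum n (fun j => w j * rsum m (fun b => x a * rho j a b * y b)))).
 { apply rsum_ext; intros a Ha. rewrite rsum_swap. apply rsum_ext; intros. apply rsum_scal. }
 rewrite rsum_swap. apply rsum_ext; intros j Hj. rewrite rsum_scal. f_equal.
 apply spec_quad; auto. Qed.

Lemma trace_mix m n w rho : mtrace m (mwsum n w rho) = rsum n (fun j => w j * mtrace m (rho j)).
Proof. unfold mtrace, mwsum. rewrite rsum_swap. apply rsum_ext; intros. apply rsum_scal. Qed.

Lemma sq_nonneg x : 0 <= x * x. Proof. nra. Qed.

Section Mix.
Variables (f : R -> R) (m n : nat) (w : nat -> R) (rho : nat -> mat) (Qs : nat -> mat)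
  (lams : nat -> nat -> R) (V : mat) (mu : nat -> R).
Hypothesis F0 : f 0 = 0.
Hypothesis FT : forall x, 0 < x -> exists s, (forall z, 0 <= z -> f x + s * (z - x) <= f z) /\ f x <= x * s.
Hypothesis Hw : forall j, (j < n)%nat -> 0 <= w j.
Hypothesis Hw1 : rsum n w = 1.
Hypothesis HS : forall j, (j < n)%nat -> spectral m (rho j) (Qs j) (lams j).
Hypothesis Hl0 : forall j k, (j < n)%nat -> (k < m)%nat -> 0 <= lams j k.
Hypothesis Hl1 : forall j, (j < n)%nat -> rsum m (lams j) = 1.
Hypothesis HV : spectral m (mwsum n w rho) V mu.

Let G j k l := dot m (col (Qs j) k) (col V l).
Let P j k l := w j * lams j k * (G j k l * G j k l).

Lemma P_nonneg j k l : (j < n)%nat -> (k < m)%nat -> 0 <= P j k l.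
Proof. intros. unfold P. apply Rmult_le_pos; [apply Rmult_le_pos|apply sq_nonneg]; auto. Qed.

Lemma mu_P l : (l < m)%nat -> rsum n (fun j => rsum m (fun k => P j k l)) = mu l.
Proof. intros Hl. rewrite <- (spec_rayleigh m _ V mu l HV Hl).
 change (rsum n (fun j => rsum m (fun k => P j k l)) = rsum m (fun a => rsum m (fun b => col V l a * mwsum n w rho a b * col V l b))).
 rewrite (quad_mix m n w rho Qs lams (col V l) (col V l) HS).
 apply rsum_ext; intros j Hj. rewrite <- rsum_scal. apply rsum_ext; intros k Hk.
 unfold P, G. ring. Qed.

Lemma mu_nonneg l : (l < m)%nat -> 0 <= mu l.
Proof. intros Hl. rewrite <- mu_P by auto. apply rsum_nonneg; intros j Hj.
 apply rsum_nonneg; intros k Hk. apply P_nonneg; auto. Qed.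

Lemma G_bessel j k : (j < n)%nat -> (k < m)%nat -> rsum m (fun l => G j k l * G j k l) <= 1.
Proof. intros Hj Hk. destruct (HS j Hj) as [HOj _]. destruct HV as [HO _].
 pose proof (bessel m V (col (Qs j) k) HO) as B.
 rewrite (orth_dot m (Qs j) k k HOj Hk Hk), Nat.eqb_refl in B.
 eapply Rle_trans; [|exact B]. right. apply rsum_ext; intros. unfold G. rewrite dot_sym. auto. Qed.

Lemma mu_sum : rsum m mu = 1.
Proof. rewrite <- (spec_trace m _ V mu HV). rewrite trace_mix.
 rewrite <- Hw1. apply rsum_ext; intros j Hj. rewrite (spec_trace m _ _ _ (HS j Hj)).
 rewrite Hl1 by auto. ring. Qed.

Lemma P_full j k : (j < n)%nat -> (k < m)%nat -> rsum m (fun l => P j k l) = w j * lams j k.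
Proof. intros Hj Hk.
 set (E := fun j k => w j * lams j k - rsum m (fun l => P j k l)).
 assert (En : forall j k, (j < n)%nat -> (k < m)%nat -> 0 <= E j k).
 { intros j' k' Hj' Hk'. unfold E.
   assert (rsum m (fun l => P j' k' l) = w j' * lams j' k' * rsum m (fun l => G j' k' l * G j' k' l)).
   { rewrite <- rsum_scal. apply rsum_ext; intros. unfold P. ring. }
   rewrite H. pose proof (G_bessel j' k' Hj' Hk').
   assert (0 <= w j' * lams j' k') by (apply Rmult_le_pos; auto). nra. }
 assert (Es : rsum n (fun j => rsum m (fun k => E j k)) = 0).
 { unfold E. transitivity (rsum n (fun j => w j * rsum m (lams j)) - rsum n (fun j => rsum m (fun k => rsum m (fun l => P j k l)))).
   { rewrite <- rsum_minus. apply rsum_ext; intros j' Hj'. rewrite rsum_minus, rsum_scal. reflexivity. }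
   rewrite (rsum_ext n (fun j => rsum m (fun k => rsum m (fun l => P j k l))) (fun j => rsum m (fun l => rsum m (fun k => P j k l)))) by (intros; apply rsum_swap).
   rewrite rsum_swap.
   rewrite (rsum_ext n _ (fun j => w j)) by (intros; rewrite Hl1; auto; ring).
   rewrite (rsum_ext m _ mu) by (intros; apply mu_P; auto).
   change (rsum n w - rsum m mu = 0). rewrite Hw1, mu_sum. ring. }
 assert (E1 : rsum m (fun k => E j k) = 0).
 { apply (rsum_nonneg_zero n (fun j => rsum m (fun k => E j k))); auto.
   intros; apply rsum_nonneg; intros; apply En; auto. }
 assert (E j k = 0) by (apply (rsum_nonneg_zero m (fun k => E j k)); auto).
 unfold E in H. lra. Qed.

Lemma P_zero j k l : (j < n)%nat -> (k < m)%nat -> (l < m)%nat -> mu l = 0 -> P j k l = 0.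
Proof. intros Hj Hk Hl H0. rewrite <- (mu_P l Hl) in H0.
 assert (rsum m (fun k => P j k l) = 0).
 { apply (rsum_nonneg_zero n (fun j => rsum m (fun k => P j k l))); auto.
   intros; apply rsum_nonneg; intros; apply P_nonneg; auto. }
 apply (rsum_nonneg_zero m (fun k => P j k l)); auto. intros; apply P_nonneg; auto. Qed.

Let beta j k l := if Req_EM_T (mu l) 0 then 0 else G j k l / mu l.
Let cw j k l := w j * lams j k * (beta j k l * G j k l).

Lemma betaG_nonneg j k l : (l < m)%nat -> 0 <= beta j k l * G j k l.
Proof. intros Hl. unfold beta. destruct (Req_EM_T (mu l) 0). lra.
 pose proof (mu_nonneg l Hl). unfold Rdiv.
 replace (G j k l * / mu l * G j k l) with ((G j k l * G j k l) * / mu l) by ring.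
 apply Rmult_le_pos. apply sq_nonneg. left; apply Rinv_0_lt_compat; lra. Qed.

Lemma cw_nonneg j k l : (j < n)%nat -> (k < m)%nat -> (l < m)%nat -> 0 <= cw j k l.
Proof. intros. unfold cw. apply Rmult_le_pos; [apply Rmult_le_pos; auto|apply betaG_nonneg; auto]. Qed.

Lemma cw_mu j k l : (j < n)%nat -> (k < m)%nat -> (l < m)%nat -> cw j k l * mu l = P j k l.
Proof. intros Hj Hk Hl. unfold cw, beta. destruct (Req_EM_T (mu l) 0) as [E|E].
 - rewrite P_zero by auto. ring.
 - unfold P. field. auto. Qed.

Lemma cw_sum j k : (j < n)%nat -> (k < m)%nat -> rsum m (fun l => cw j k l) <= 1.
Proof. intros Hj Hk.
 set (T := rsum m (fun l => beta j k l * G j k l)).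
 set (x := fun a => rsum m (fun l => beta j k l * V a l)).
 destruct HV as [HO HA].
 assert (Dv : forall l, (l < m)%nat -> dot m (col V l) x = beta j k l).
 { intros l Hl. unfold dot, col, x.
   rewrite rsum_mul_rsum_l.
   transitivity (rsum m (fun l' => if Nat.eqb l' l then beta j k l' else 0)).
   { apply rsum_ext; intros l' Hl'.
     transitivity (beta j k l' * rsum m (fun a => V a l' * V a l)).
     { rewrite <- rsum_scal. apply rsum_ext; intros; ring. }
     rewrite HO by auto. destruct (Nat.eqb l' l); ring. }
   apply rsum_delta; auto. }
 assert (Dq : dot m (col (Qs j) k) x = T).
 { unfold dot, col, x, T. rewrite rsum_mul_rsum_l. apply rsum_ext; intros l Hl.
   unfold G, dot, col. rewrite <- rsum_scal. apply rsum_ext; intros; ring. }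
 assert (Q1 : rsum m (fun a => rsum m (fun b => x a * mwsum n w rho a b * x b)) = T).
 { rewrite (spec_quad m _ V mu x x HV). unfold T. apply rsum_ext; intros l Hl.
   rewrite Dv by auto. unfold beta. destruct (Req_EM_T (mu l) 0). ring. field; auto. }
 rewrite (quad_mix m n w rho Qs lams x x HS) in Q1.
 assert (T0 : 0 <= T) by (apply rsum_nonneg; intros; apply betaG_nonneg; auto).
 assert (Q2 : w j * (lams j k * T * T) <= T).
 { eapply Rle_trans; [|right; exact Q1]. eapply Rle_trans; [|apply (rsum_term n _ j); auto].
   - apply Rmult_le_compat_l; auto. rewrite <- Dq.
     apply (rsum_term m (fun k => lams j k * dot m (col (Qs j) k) x * dot m (col (Qs j) k) x)); auto.
     intros k' Hk'. rewrite Rmult_assoc. apply Rmult_le_pos; auto. apply sq_nonneg.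
   - intros j' Hj'. apply Rmult_le_pos; auto. apply rsum_nonneg; intros k' Hk'.
     rewrite Rmult_assoc. apply Rmult_le_pos; auto. apply sq_nonneg. }
 assert (E : rsum m (fun l => cw j k l) = w j * lams j k * T).
 { unfold T. rewrite <- rsum_scal. apply rsum_ext; intros; unfold cw; ring. }
 rewrite E. assert (0 <= w j * lams j k) by (apply Rmult_le_pos; auto).
 destruct T0 as [Tp|Tz]. 
 - assert (w j * lams j k * T * T <= 1 * T) by lra.
   apply Rmult_le_reg_r in H0; auto.
 - rewrite <- Tz. lra. Qed.

Lemma mix_bound : rsum n (fun j => rsum m (fun k => f (w j * lams j k))) <= rsum m (fun l => f (mu l)).
Proof.
 assert (S1 : forall j k, (j < n)%nat -> (k < m)%nat ->
   f (w j * lams j k) <= rsum m (fun l => cw j k l * f (mu l))).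
 { intros j k Hj Hk. rewrite <- (P_full j k Hj Hk).
   rewrite (rsum_ext m _ (fun l => cw j k l * mu l)) by (intros; symmetry; apply cw_mu; auto).
   apply jensen; auto. intros; apply cw_nonneg; auto. intros; apply mu_nonneg; auto.
   apply cw_sum; auto. }
 eapply Rle_trans.
 { apply rsum_le; intros j Hj. apply rsum_le; intros k Hk. apply S1; auto. }
 transitivity (rsum m (fun l => rsum n (fun j => rsum m (fun k => cw j k l)) * f (mu l))).
 { right. rewrite (rsum_ext n _ (fun j => rsum m (fun l => rsum m (fun k => cw j k l * f (mu l))))).
   2: { intros; apply rsum_swap. }
   rewrite rsum_swap. apply rsum_ext; intros l Hl. rewrite <- rsum_scal_r.
   apply rsum_ext; intros. rewrite <- rsum_scal_r. auto. }
 right. apply rsum_ext; intros l Hl. destruct (Req_EM_T (mu l) 0) as [Z|Z].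
 - rewrite Z, F0. ring.
 - transitivity (rsum n (fun j => rsum m (fun k => P j k l)) / mu l * f (mu l)).
   { f_equal. unfold Rdiv. rewrite <- rsum_scal_r. apply rsum_ext; intros j Hj.
     rewrite <- rsum_scal_r. apply rsum_ext; intros k Hk.
     rewrite <- (cw_mu j k l) by auto. field. auto. }
   rewrite mu_P by auto. field. auto. Qed.

End Mix.


Definition ftan (f : R -> R) := forall x, 0 < x -> exists s, (forall z, 0 <= z -> f x + s * (z - x) <= f z) /\ f x <= x * s.

Lemma diag_bound f m A Q lam d : f 0 = 0 -> ftan f -> spectral m A Q lam ->
  (forall a b, (a < m)%nat -> (b < m)%nat -> A a b = if Nat.eqb a b then d a else 0) ->
  (forall a, (a < m)%nat -> 0 <= d a) ->
  rsum m (fun l => f (lam l)) <= rsum m (fun a => f (d a)).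
Proof. intros F0 FT HS HA Hd. pose proof HS as [HO _].
 assert (Lam : forall l, (l < m)%nat -> lam l = rsum m (fun a => (Q a l * Q a l) * d a)).
 { intros l Hl. rewrite <- (spec_rayleigh m A Q lam l HS Hl). apply rsum_ext; intros a Ha.
   transitivity (rsum m (fun b => if Nat.eqb a b then Q a l * d a * Q b l else 0)).
   { apply rsum_ext; intros b Hb. rewrite HA by auto. destruct (Nat.eqb a b); ring. }
   rewrite rsum_delta' by auto. ring. }
 set (r := fun a => rsum m (fun l => Q a l * Q a l)).
 assert (Hr : forall a, (a < m)%nat -> r a <= 1).
 { intros a Ha. set (ea := fun i => if Nat.eqb i a then 1 else 0).
   pose proof (bessel m Q ea HO) as B.
   assert (E1 : dot m ea ea = 1).
   { unfold dot, ea. transitivity (rsum m (fun i => if Nat.eqb i a then 1 else 0)).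
     apply rsum_ext; intros. destruct (Nat.eqb i a); ring.
     apply (rsum_delta m a (fun _ => 1)); auto. }
   assert (E2 : forall l, (l < m)%nat -> dot m (col Q l) ea = Q a l).
   { intros l Hl. unfold dot, col, ea. transitivity (rsum m (fun i => if Nat.eqb i a then Q i l else 0)).
     apply rsum_ext; intros. destruct (Nat.eqb i a); ring.
     apply (rsum_delta m a (fun i => Q i l)); auto. }
   rewrite E1 in B. eapply Rle_trans; [|exact B]. right. unfold r.
   apply rsum_ext; intros l Hl. rewrite E2; auto. }
 assert (Tr : rsum m (fun a => (1 - r a) * d a) = 0).
 { assert (T1 : rsum m lam = rsum m d).
   { rewrite <- (spec_trace m A Q lam HS). unfold mtrace. apply rsum_ext; intros.
     rewrite HA by auto. rewrite Nat.eqb_refl. auto. }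
   assert (T2 : rsum m lam = rsum m (fun a => r a * d a)).
   { rewrite (rsum_ext m lam _ Lam). rewrite rsum_swap. apply rsum_ext; intros a Ha.
     unfold r. rewrite <- rsum_scal_r. auto. }
   transitivity (rsum m d - rsum m (fun a => r a * d a)).
   { rewrite <- rsum_minus. apply rsum_ext; intros; ring. }
   lra. }
 assert (Z : forall a, (a < m)%nat -> (1 - r a) * d a = 0).
 { apply (rsum_nonneg_zero m (fun a => (1 - r a) * d a)); auto.
   intros a Ha. apply Rmult_le_pos; auto. specialize (Hr a Ha). lra. }
 eapply Rle_trans.
 { apply rsum_le; intros l Hl. rewrite Lam by auto. apply jensen; auto.
   - intros; apply sq_nonneg.
   - right. rewrite HO by auto. rewrite Nat.eqb_refl. auto. }
 right. rewrite rsum_swap. apply rsum_ext; intros a Ha.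
 rewrite rsum_scal_r. fold (r a).
 destruct (Req_dec (d a) 0) as [E|E].
 - rewrite E, F0. ring.
 - assert (r a = 1).
   { specialize (Z a Ha). apply Rmult_integral in Z. destruct Z; [lra|contradiction]. }
   rewrite H. ring.
Qed.

Lemma delta_sym m j : symmetric m (delta j).
Proof. intros a b _ _. unfold delta. rewrite Bool.andb_comm. auto. Qed.

Lemma delta_trace m j : (j < m)%nat -> mtrace m (delta j) = 1.
Proof. intros Hj. unfold mtrace, delta.
 transitivity (rsum m (fun i => if Nat.eqb i j then 1 else 0)).
 apply rsum_ext; intros. destruct (Nat.eqb i j); auto.
 apply (rsum_delta m j (fun _ => 1)); auto. Qed.

Lemma delta_spec f m j Q lam : f 0 = 0 -> (j < m)%nat -> spectral m (delta j) Q lam ->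
  rsum m (fun l => f (lam l)) = f 1.
Proof. intros F0 Hj HS.
 assert (L1 : forall l, (l < m)%nat -> lam l = Q j l * Q j l).
 { intros l Hl. rewrite <- (spec_rayleigh m _ Q lam l HS Hl).
   transitivity (rsum m (fun a => if Nat.eqb a j then Q a l * Q j l else 0)).
   { apply rsum_ext; intros a Ha. 
     transitivity (rsum m (fun b => if Nat.eqb b j then (if Nat.eqb a j then Q a l * Q b l else 0) else 0)).
     { apply rsum_ext; intros b Hb. unfold delta.
       destruct (Nat.eqb a j), (Nat.eqb b j); simpl; ring. }
     rewrite (rsum_delta m j (fun b => if Nat.eqb a j then Q a l * Q b l else 0)) by auto.
     reflexivity. }
   apply (rsum_delta m j (fun a => Q a l * Q j l)); auto. }
 assert (L2 : forall l, (l < m)%nat -> Q j l = lam l * Q j l).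
 { intros l Hl. rewrite <- (spec_eig m _ Q lam HS l j Hl Hj).
   transitivity (rsum m (fun b => if Nat.eqb b j then Q b l else 0)).
   symmetry; apply (rsum_delta m j (fun b => Q b l)); auto.
   apply rsum_ext; intros b Hb. unfold delta. rewrite Nat.eqb_refl. simpl.
   destruct (Nat.eqb b j); ring. }
 assert (L3 : forall l, (l < m)%nat -> f (lam l) = lam l * f 1).
 { intros l Hl. specialize (L1 l Hl). specialize (L2 l Hl).
   destruct (Req_dec (Q j l) 0) as [E|E].
   - rewrite L1, E, Rmult_0_l, F0. ring.
   - assert (lam l = 1).
     { apply (Rmult_eq_reg_r (Q j l)); auto. lra. }
     rewrite H. ring. }
 rewrite (rsum_ext m _ (fun l => lam l * f 1) L3), rsum_scal_r.
 rewrite <- (spec_trace m _ Q lam HS), delta_trace by auto. ring. Qed.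

Lemma mwsum_delta n w a b : mwsum n w delta a b =
  if Nat.eqb a b then rsum n (fun j => if Nat.eqb a j then w j else 0) else 0.
Proof. unfold mwsum, delta. destruct (Nat.eqb_spec a b).
 - subst. apply rsum_ext; intros. destruct (Nat.eqb b i); simpl; ring.
 - apply rsum_zero. intros j Hj. destruct (Nat.eqb_spec a j), (Nat.eqb_spec b j); simpl; try lia; ring. Qed.

Lemma mwsum_sym m n w rho : (forall j, (j < n)%nat -> symmetric m (rho j)) -> symmetric m (mwsum n w rho).
Proof. intros H a b Ha Hb. unfold mwsum. apply rsum_ext; intros j Hj. rewrite H; auto. Qed.

Lemma diag_w_bound f m n w Q lam : f 0 = 0 -> ftan f -> (n <= m)%nat ->
  (forall j, (j < n)%nat -> 0 <= w j) ->
  spectral m (mwsum n w delta) Q lam ->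
  rsum m (fun l => f (lam l)) <= rsum n (fun a => f (w a)).
Proof. intros F0 FT Hnm Hw HS.
 set (d := fun a => rsum n (fun j => if Nat.eqb a j then w j else 0)).
 assert (Hd : forall a, (a < n)%nat -> d a = w a).
 { intros a Ha. apply (rsum_delta' n a w); auto. }
 assert (Hd0 : forall a, (n <= a)%nat -> d a = 0).
 { intros a Ha. apply rsum_zero. intros j Hj. destruct (Nat.eqb_spec a j); [lia|auto]. }
 eapply Rle_trans. apply (diag_bound f m _ Q lam d F0 FT HS).
 - intros a b _ _. apply mwsum_delta.
 - intros a Ha. destruct (Nat.lt_ge_cases a n). rewrite Hd; auto. rewrite Hd0; auto; lra.
 - right. assert (Em : m = (n + (m - n))%nat) by lia. rewrite Em at 1. rewrite rsum_split.
   rewrite (rsum_zero (m - n) (fun i => f (d (n + i)%nat))).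
   rewrite Rplus_0_r. apply rsum_ext; intros. rewrite Hd; auto.
   intros i Hi. rewrite Hd0 by lia. auto. Qed.


Lemma rpow_mult a b al : 0 <= a -> 0 <= b -> rpow (a * b) al = rpow a al * rpow b al.
Proof. intros Ha Hb. destruct Ha as [Ha|Ha]; [destruct Hb as [Hb|Hb]|].
 - rewrite !rpow_pos by (auto; apply Rmult_lt_0_compat; auto). symmetry; apply Rpower_mult_distr; auto.
 - subst. rewrite Rmult_0_r, rpow_0. ring.
 - subst. rewrite Rmult_0_l, rpow_0. ring. Qed.

Lemma Rpower_1_base a : Rpower 1 a = 1.
Proof. unfold Rpower. rewrite ln_1, Rmult_0_r, exp_0. auto. Qed.

Lemma rpow_one al : rpow 1 al = 1.
Proof. rewrite rpow_pos by lra. apply Rpower_1_base. Qed.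

Lemma rpow_le_self x al : 0 <= x <= 1 -> 1 <= al -> rpow x al <= x.
Proof. intros [H0 H1] Ha. destruct H0 as [H0|H0].
 - rewrite rpow_pos by auto. rewrite <- (Rpower_xm1 x al H0).
   assert (Rpower x (al - 1) <= Rpower 1 (al - 1)) by (apply Rle_Rpower_l; lra).
   rewrite Rpower_1_base in H. nra.
 - subst. rewrite rpow_0. lra. Qed.

Lemma xlogx_mult a b : 0 <= a -> 0 <= b -> xlogx (a * b) = a * xlogx b + b * xlogx a.
Proof. intros Ha Hb. destruct Ha as [Ha|Ha]; [destruct Hb as [Hb|Hb]|].
 - rewrite !xlogx_pos by (auto; apply Rmult_lt_0_compat; auto). rewrite ln_mult by auto. ring.
 - subst. rewrite Rmult_0_r, xlogx_0. ring.
 - subst. rewrite Rmult_0_l, xlogx_0. ring. Qed.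

Lemma xlogx_one : xlogx 1 = 0.
Proof. rewrite xlogx_pos by lra. rewrite ln_1. ring. Qed.

Theorem proposition3 (alpha : R) (m n : nat) (w : nat -> R) :
  1 <= alpha <= 2 ->
  (1 <= n)%nat -> (n <= m)%nat ->
  (forall j, (j < n)%nat -> 0 <= w j) ->
  rsum n w = 1 ->
  forall rho : nat -> mat,
    (forall j, (j < n)%nat -> density m (rho j)) ->
    qJT m n alpha w rho <= qJT m n alpha w delta.
Proof.
 intros Ha Hn Hnm Hw Hw1 rho Hrho.
 set (Qs := fun j => fst (spec_choice m (rho j))).
 set (lams := fun j => snd (spec_choice m (rho j))).
 assert (HS : forall j, (j < n)%nat -> spectral m (rho j) (Qs j) (lams j)).
 { intros j Hj. apply spec_choice_ok. apply Hrho; auto. }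
 assert (Hl0 : forall j k, (j < n)%nat -> (k < m)%nat -> 0 <= lams j k).
 { intros j k Hj Hk. apply (spec_nonneg m (rho j) (Qs j)); auto. apply Hrho; auto. }
 assert (Hl1 : forall j, (j < n)%nat -> rsum m (lams j) = 1).
 { intros j Hj. rewrite <- (spec_trace m (rho j) (Qs j)); auto. apply Hrho; auto. }
 assert (HV : spectral m (mwsum n w rho) (fst (spec_choice m (mwsum n w rho))) (snd (spec_choice m (mwsum n w rho)))).
 { apply spec_choice_ok, mwsum_sym. intros; apply Hrho; auto. }
 assert (HD : spectral m (mwsum n w delta) (fst (spec_choice m (mwsum n w delta))) (snd (spec_choice m (mwsum n w delta)))).
 { apply spec_choice_ok, mwsum_sym. intros; apply delta_sym. }
 assert (Hdel : forall j, (j < n)%nat -> spectral m (delta j) (fst (spec_choice m (delta j))) (snd (spec_choice m (delta j)))).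
 { intros; apply spec_choice_ok, delta_sym. }
 assert (K1 : forall f, f 0 = 0 -> ftan f ->
   rsum n (fun j => rsum m (fun k => f (w j * lams j k))) <= trf m f (mwsum n w rho)).
 { intros f F0 FT. unfold trf. eapply mix_bound; eauto. }
 assert (K2 : forall f, f 0 = 0 -> ftan f -> trf m f (mwsum n w delta) <= rsum n (fun a => f (w a))).
 { intros f F0 FT. unfold trf. eapply diag_w_bound; eauto. }
 assert (K3 : forall f, f 0 = 0 -> forall j, (j < n)%nat -> trf m f (delta j) = f 1).
 { intros f F0 j Hj. unfold trf. eapply delta_spec; eauto. lia. }
 assert (Tt : forall f j, trf m f (rho j) = rsum m (fun k => f (lams j k))) by reflexivity.
 unfold qJT, tsallis. destruct (Req_EM_T alpha 1) as [E1|E1].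
 -
   assert (FT : ftan xlogx) by (intros x Hx; apply xlogx_tangent; auto).
   specialize (K1 xlogx xlogx_0 FT). specialize (K2 xlogx xlogx_0 FT).
   rewrite (rsum_ext n (fun j => w j * - trf m xlogx (delta j)) (fun _ => 0)).
   2: { intros j Hj. rewrite K3 by (auto; apply xlogx_0). rewrite xlogx_one. ring. }
   rewrite rsum_0.
   assert (E : rsum n (fun j => rsum m (fun k => xlogx (w j * lams j k))) =
     rsum n (fun j => w j * trf m xlogx (rho j)) + rsum n (fun j => xlogx (w j))).
   { rewrite <- rsum_plus. apply rsum_ext; intros j Hj. rewrite Tt.
     transitivity (rsum m (fun k => w j * xlogx (lams j k) + lams j k * xlogx (w j))).
     { apply rsum_ext; intros k Hk. apply xlogx_mult; auto. }
     rewrite rsum_plus, rsum_scal, rsum_scal_r, Hl1 by auto. ring. }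
   rewrite (rsum_ext n (fun j => w j * - trf m xlogx (rho j)) (fun j => -1 * (w j * trf m xlogx (rho j))))
     by (intros; ring).
   rewrite rsum_scal. lra.
 -
   assert (Ha1 : 1 < alpha) by lra.
   set (f := fun x => rpow x alpha).
   assert (F0 : f 0 = 0) by apply rpow_0.
   assert (FT : ftan f) by (intros x Hx; apply rpow_tangent; lra).
   specialize (K1 f F0 FT). specialize (K2 f F0 FT).
   change (fun x => rpow x alpha) with f.
   rewrite (rsum_ext n (fun j => w j * ((trf m f (delta j) - 1) / (1 - alpha))) (fun _ => 0)).
   2: { intros j Hj. rewrite K3 by auto. unfold f. rewrite rpow_one. field. lra. }
   rewrite rsum_0.
   set (X := trf m f (mwsum n w rho)). set (Z := trf m f (mwsum n w delta)).
   set (t := fun j => trf m f (rho j)).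
   assert (E1' : rsum n (fun j => w j * ((trf m f (rho j) - 1) / (1 - alpha))) =
      (rsum n (fun j => w j * t j) - 1) / (1 - alpha)).
   { transitivity (rsum n (fun j => (w j * t j - w j) * / (1 - alpha))).
     { apply rsum_ext; intros. unfold t, Rdiv. ring. }
     rewrite rsum_scal_r, rsum_minus. change (rsum n (fun j => w j)) with (rsum n w).
     rewrite Hw1. auto. }
   rewrite E1'.
   assert (Y : rsum n (fun j => rsum m (fun k => f (w j * lams j k))) = rsum n (fun j => f (w j) * t j)).
   { apply rsum_ext; intros j Hj. unfold t. rewrite Tt, <- rsum_scal. apply rsum_ext; intros k Hk.
     unfold f. apply rpow_mult; auto. }
   assert (Ht1 : forall j, (j < n)%nat -> t j <= 1).
   { intros j Hj. unfold t. rewrite Tt, <- (Hl1 j Hj). apply rsum_le; intros k Hk.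
     unfold f. apply rpow_le_self; [|lra]. split; auto.
     rewrite <- (Hl1 j Hj). apply (rsum_term m (lams j) k); auto. }
   assert (Hw1' : forall j, (j < n)%nat -> w j <= 1).
   { intros j Hj. rewrite <- Hw1. apply rsum_term; auto. }
   assert (YW : rsum n (fun j => f (w j)) - 1 <= rsum n (fun j => f (w j) * t j) - rsum n (fun j => w j * t j)).
   { transitivity (rsum n (fun j => f (w j)) - rsum n w). { rewrite Hw1; lra. }
     rewrite <- !rsum_minus. apply rsum_le; intros j Hj.
     assert (f (w j) <= w j) by (apply rpow_le_self; [split; auto|lra]).
     specialize (Ht1 j Hj). nra. }
   rewrite Y in K1. assert (Num : 0 <= X - rsum n (fun j => w j * t j) - Z + 1) by (unfold X, Z in *; lra).
   assert (Inv : / (1 - alpha) < 0) by (apply Rinv_lt_0_compat; lra).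
   unfold Rdiv. nra.
Qed.
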